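(* In the setting of the context, for $\delta\in(0,1)$, with probability at least $1-\delta$, for all $t\in[H]$ and all $(s,a)$ with $d^\mu_t(s,a)>0$, \[ \big|\tilde\sigma_{V^{\rm in}_{t+1}}(s,a)-\sigma_{V^{\rm in}_{t+1}}(s,a)\big|\le6H^2\sqrt{\frac{\log(4HSA/\delta)}{m\,d^\mu_t(s,a)}}+\frac{4H^2\log(4HSA/\delta)}{m\,d^\mu_t(s,a)}. \]
   Context: $\mathcal D$ consists of $m$ i.i.d. episodes from behavior policy $\mu$ in a finite-horizon tabular MDP with $S$ states, $A$ actions, horizon $H$, transitions $P_t$. For each $t\in[H]$, $V^{\rm in}_{t+1}:\mathcal S\to[0,H]$ is fixed (not depending on $\mathcal D$). $d^\mu_t(s,a)=\mathbb P^\mu(s_t=s,a_t=a)$; $\sigma_V(s,a)=\mathrm{Var}_{s'\sim P_t(\cdot|s,a)}[V(s')]$. $n_{t,s,a}$ is the number of episodes in $\mathcal D$ with $(s_t,a_t)=(s,a)$. If $n_{t,s,a}\ge\frac12md^\mu_t(s,a)$ and $n_{t,s,a}>0$, set $\tilde z_t(s,a)=\frac1{n_{t,s,a}}\sum_iV^{\rm in}_{t+1}(s^{(i)}_{t+1})\mathbf 1[s^{(i)}_t=s,a^{(i)}_t=a]$ and $\tilde\sigma_{V^{\rm in}_{t+1}}(s,a)=\frac1{n_{t,s,a}}\sum_i[V^{\rm in}_{t+1}(s^{(i)}_{t+1})]^2\mathbf 1[s^{(i)}_t=s,a^{(i)}_t=a]-\tilde z_t(s,a)^2$; otherwise $\tilde\sigma_{V^{\rm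 in}_{t+1}}(s,a)=\sigma_{V^{\rm in}_{t+1}}(s,a)$. *)

(* Defs.v *)
From HB Require Import structures.
From mathcomp Require Import all_boot all_order all_algebra.
From mathcomp Require Import all_classical all_reals all_analysis.
Set Implicit Arguments. Unset Strict Implicit. Unset Printing Implicit Defensive.
Import Order.TTheory GRing.Theory Num.Theory.
Local Open Scope ring_scope.

(* Time steps t in [H] are represented 0-indexed by t : 'I_H.
   A trajectory is (states s_1..s_{H+1}, actions a_1..a_H):
   states indexed by 'I_H.+1, actions by 'I_H. *)
Definition traj (S A : finType) (H : nat) : finType :=
  ({ffun 'I_H.+1 -> S} * {ffun 'I_H -> A})%type.

Definition st {S A : finType} {H : nat} (tau : traj S A H) (t : 'I_H) : S :=
  tau.1 (widen_ord (leqnSn H) t).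
Definition nxt {S A : finType} {H : nat} (tau : traj S A H) (t : 'I_H) : S :=
  tau.1 (lift ord0 t).
Definition act {S A : finType} {H : nat} (tau : traj S A H) (t : 'I_H) : A :=
  tau.2 t.

Section Defs.
Variables (R : realType) (S A : finType) (H : nat).
(* initial distribution, behavior policy mu_t(a|s), transitions P_t(s'|s,a) *)
Variables (d1 : S -> R) (mu : 'I_H -> S -> A -> R) (P : 'I_H -> S -> A -> S -> R).

Definition traj_prob (tau : traj S A H) : R :=
  d1 (tau.1 ord0) *
  \prod_(t < H) (mu t (st tau t) (act tau t) * P t (st tau t) (act tau t) (nxt tau t)).

Definition occupancy (t : 'I_H) (s : S) (a : A) : R :=
  \sum_(tau : traj S A H | (st tau t == s) && (act tau t == a)) traj_prob tau.

Definition true_var (V : S -> R) (t : 'I_H) (s : S) (a : A) : R :=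
  \sum_(s' : S) P t s a s' * (V s' - \sum_(s'' : S) P t s a s'' * V s'') ^+ 2.

Variable m : nat.
Definition dataset_prob (D : {ffun 'I_m -> traj S A H}) : R :=
  \prod_(i < m) traj_prob (D i).

Definition visits (D : {ffun 'I_m -> traj S A H}) (t : 'I_H) (s : S) (a : A) : nat :=
  #|[set i : 'I_m | (st (D i) t == s) && (act (D i) t == a)]|.

Definition emp_mean (V : S -> R) (D : {ffun 'I_m -> traj S A H}) t s a : R :=
  (visits D t s a)%:R^-1 *
  \sum_(i < m | (st (D i) t == s) && (act (D i) t == a)) V (nxt (D i) t).

Definition emp_var (V : S -> R) (D : {ffun 'I_m -> traj S A H}) t s a : R :=
  (visits D t s a)%:R^-1 *
  \sum_(i < m | (st (D i) t == s) && (act (D i) t == a)) (V (nxt (D i) t)) ^+ 2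
  - (emp_mean V D t s a) ^+ 2.

Definition tilde_var (V : S -> R) (D : {ffun 'I_m -> traj S A H}) t s a : R :=
  if (2^-1 * m%:R * occupancy t s a <= (visits D t s a)%:R) && (0 < visits D t s a)%N
  then emp_var V D t s a else true_var V t s a.
End Defs.

(* Main.v *)
Require Import Defs.
From HB Require Import structures.
From mathcomp Require Import all_boot all_order all_algebra.
From mathcomp Require Import all_classical all_reals all_analysis.
From mathcomp Require Import ring lra.
Import Order.TTheory GRing.Theory Num.Theory.
Local Open Scope ring_scope.

Lemma sce_gen (R : realType) (U T : finType) (g : U -> T) (set : U -> T -> U)
  (h1 : forall u x, set (set u x) (g u) = u) (h2 : forall u x, g (set u x) = x)
  (F : U -> R) :
  #|T|%:R * \sum_u F u = \sum_u \sum_x F (set u x).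
Proof.
rewrite pair_big /=.
pose phi (p : U * T) := (set p.1 p.2, g p.1).
have phiK : involutive phi by case=> u x; rewrite /phi /= h1 h2.
rewrite (reindex_inj (inv_inj phiK)) /=.
rewrite /phi /=.
rewrite (eq_bigr (fun p : U * T => F p.1)); last by case=> u x _ /=; rewrite h1.

rewrite -(pair_big predT predT (fun u (_ : T) => F u)) /= mulr_sumr.
by apply: eq_bigr => u _; by rewrite sumr_const mulr_natl.
Qed.
Lemma exp_quad (R : realType) (w : R) : `|w| <= 3^-1 -> expR w <= 1 + w + w ^+ 2.
Proof.
move=> hw.
have hw' : -(3^-1) <= w <= 3^-1 by rewrite -ler_norml.
case/andP: hw' => hw1 hw2.
have h1 : 1 - w / 2 <= expR (- (w / 2)) by have := expR_ge1Dx (- (w / 2)); rewrite -[_ - _]/(1 + - (w/2)).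
have hpos : 0 < 1 - w / 2 by lra.
have h2 : expR (w / 2) <= (1 - w / 2)^-1.
  rewrite expRN in h1.
  have e0 := expR_gt0 (w / 2).
  by rewrite -[expR (w / 2)]invrK lef_pV2 ?posrE ?invr_gt0.
have h3 : expR w = expR (w / 2) ^+ 2 by rewrite -expRM_natl; congr expR; lra.
rewrite h3.
have h4 : expR (w / 2) ^+ 2 <= ((1 - w / 2)^-1) ^+ 2.
  by rewrite lerXn2r // ?nnegrE ?expR_ge0 // ?invr_ge0 ?ltW.
apply: (le_trans h4).
have hq : 0 < 1 + w + w ^+ 2 by nra.
rewrite exprVn -[1 + w + w ^+ 2]invrK lef_pV2 ?posrE ?invr_gt0 ?exprn_gt0 //.
rewrite -[(1 + w + w ^+ 2)^-1]mulr1 ler_pdivrMl //.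
nra.
Qed.

Lemma arith4 (R : realType) (h s a dl : R) : h * s * a != 0 -> dl != 0 ->
  4 / (4 * h * s * a / dl) * a * s * h = dl.
Proof.
move=> k d; field.
by move: k; rewrite d !mulf_eq0 !negb_or => /andP[/andP[-> ->] ->].
Qed.
Section Traj.
Variables (R : realType) (S A : finType) (H : nat) (d1 : S -> R)
  (mu : 'I_H -> S -> A -> R) (P : 'I_H -> S -> A -> S -> R).
Hypothesis hd1_sum : \sum_(s : S) d1 s = 1.
Hypothesis hmu_sum : forall t s, \sum_(a : A) mu t s a = 1.
Hypothesis hP_sum : forall t s a, \sum_(s' : S) P t s a s' = 1.

Definition getS (tau : traj S A H) (i : 'I_H.+1) : S := tau.1 i.
Definition getA (tau : traj S A H) (i : 'I_H) : A := tau.2 i.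
Definition updS (tau : traj S A H) (i : 'I_H.+1) (x : S) : traj S A H :=
  ([ffun j => if j == i then x else tau.1 j], tau.2).
Definition updA (tau : traj S A H) (i : 'I_H) (y : A) : traj S A H :=
  (tau.1, [ffun j => if j == i then y else tau.2 j]).

Lemma elimS (i : 'I_H.+1) (psi : traj S A H -> R) (Q : traj S A H -> S -> R)
  (hpsi : forall tau x, psi (updS tau i x) = psi tau)
  (hQ : forall tau x y, Q (updS tau i x) y = Q tau y) :
  #|S|%:R * \sum_(tau : traj S A H) psi tau * Q tau (getS tau i) = \sum_(tau : traj S A H) psi tau * \sum_x Q tau x.
Proof.
rewrite (@sce_gen R _ _ (fun tau => getS tau i) (fun tau x => updS tau i x)).
- apply: eq_bigr => tau _; rewrite mulr_sumr; apply: eq_bigr => x _.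
  by rewrite hpsi hQ /updS /getS /= ffunE eqxx.
- move=> [f1 f2] x; rewrite /updS /getS /=; congr (_, _); apply/ffunP => j.
  by rewrite !ffunE; case: eqP => // ->.
- by move=> u x; rewrite /updS /getS /= ffunE eqxx.
Qed.

Lemma elimA (i : 'I_H) (psi : traj S A H -> R) (Q : traj S A H -> A -> R)
  (hpsi : forall tau y, psi (updA tau i y) = psi tau)
  (hQ : forall tau x y, Q (updA tau i x) y = Q tau y) :
  #|A|%:R * \sum_(tau : traj S A H) psi tau * Q tau (getA tau i) = \sum_(tau : traj S A H) psi tau * \sum_x Q tau x.
Proof.
rewrite (@sce_gen R _ _ (fun tau => getA tau i) (fun tau x => updA tau i x)).
- apply: eq_bigr => tau _; rewrite mulr_sumr; apply: eq_bigr => x _.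
  by rewrite hpsi hQ /updA /getA /= ffunE eqxx.
- move=> [f1 f2] x; rewrite /updA /getA /=; congr (_, _); apply/ffunP => j.
  by rewrite !ffunE; case: eqP => // ->.
- by move=> u x; rewrite /updA /getA /= ffunE eqxx.
Qed.

Definition fac (j : 'I_H) (tau : traj S A H) : R :=
  mu j (st tau j) (act tau j) * P j (st tau j) (act tau j) (nxt tau j).
Definition W (k : nat) (tau : traj S A H) : R :=
  d1 (tau.1 ord0) * \prod_(j < H | (j < k)%N) fac j tau.

Lemma W_H tau : W H tau = traj_prob d1 mu P tau.
Proof. by rewrite /W /traj_prob; congr (_ * _); apply: eq_bigl => j; rewrite ltn_ord. Qed.

Lemma W_S (j : 'I_H) tau : W j.+1 tau = W j tau * fac j tau.
Proof.
rewrite /W -mulrA; congr (_ * _); rewrite (bigD1 j) ?ltnSn //= mulrC.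
congr (_ * _); apply: eq_bigl => i; rewrite ltnS leq_eqVlt.
case: (ltngtP i j) => /= h; last by rewrite (val_inj h) eqxx.
- by apply/eqP => e; move: h; rewrite e ltnn.
- by [].
Qed.

Lemma st_updS (tau : traj S A H) (i : 'I_H.+1) (x : S) (j : 'I_H) : (i != j :> nat) -> st (updS tau i x) j = st tau j.
Proof. by move=> h; rewrite /st /updS /= ffunE; case: eqP => // e; rewrite -e in h; rewrite eqxx in h. Qed.
Lemma nxt_updS (tau : traj S A H) (i : 'I_H.+1) (x : S) (j : 'I_H) : (i != j.+1 :> nat) -> nxt (updS tau i x) j = nxt tau j.
Proof. by move=> h; rewrite /nxt /updS /= ffunE; case: eqP => // e; rewrite -e /= in h; rewrite eqxx in h. Qed.
Lemma act_updS (tau : traj S A H) (i : 'I_H.+1) (x : S) (j : 'I_H) : act (updS tau i x) j = act tau j.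
Proof. by []. Qed.
Lemma st_updA (tau : traj S A H) (i : 'I_H) (y : A) (j : 'I_H) : st (updA tau i y) j = st tau j.
Proof. by []. Qed.
Lemma nxt_updA (tau : traj S A H) (i : 'I_H) (y : A) (j : 'I_H) : nxt (updA tau i y) j = nxt tau j.
Proof. by []. Qed.
Lemma act_updA (tau : traj S A H) (i : 'I_H) (y : A) (j : 'I_H) : (i != j) -> act (updA tau i y) j = act tau j.
Proof. by move=> h; rewrite /act /updA /= ffunE eq_sym (negbTE h). Qed.

Lemma W_updS k (i : 'I_H.+1) (x : S) (tau : traj S A H) : (k < i)%N -> W k (updS tau i x) = W k tau.
Proof.
move=> ki; rewrite /W; congr (_ * _).
  by rewrite /updS /= ffunE; case: eqP => // e; move: ki; rewrite -e.
apply: eq_bigr => j jk; rewrite /fac st_updS ?nxt_updS //.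
  by rewrite neq_ltn; apply/orP; right; apply: leq_ltn_trans ki.
by rewrite neq_ltn /=; apply/orP; right; apply: ltn_trans ki.
Qed.

Lemma W_updA k (i : 'I_H) (y : A) (tau : traj S A H) : (k <= i)%N -> W k (updA tau i y) = W k tau.
Proof.
move=> ki; rewrite /W; congr (_ * _).
apply: eq_bigr => j jk; rewrite /fac act_updA //.
by apply/eqP => e; move: jk; rewrite -e ltnNge ki.
Qed.


Lemma stepW (k : 'I_H) (phi : traj S A H -> R)
  (h1 : forall tau x, phi (updS tau (lift ord0 k) x) = phi tau)
  (h2 : forall tau y, phi (updA tau k y) = phi tau) :
  #|S|%:R * #|A|%:R * \sum_(tau : traj S A H) W k.+1 tau * phi tau
  = \sum_(tau : traj S A H) W k tau * phi tau.
Proof.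
have E : \sum_(tau : traj S A H) W k.+1 tau * phi tau =
  \sum_(tau : traj S A H) (W k tau * mu k (st tau k) (act tau k) * phi tau) *
     (fun tau x => P k (st tau k) (act tau k) x) tau (getS tau (lift ord0 k)).
  by apply: eq_bigr => tau _; rewrite W_S /fac /getS /nxt /=; ring.
rewrite E (mulrC #|S|%:R) -mulrA (elimS (lift ord0 k)
  (fun tau => W k tau * mu k (st tau k) (act tau k) * phi tau)
  (fun tau x => P k (st tau k) (act tau k) x)); first last.
- move=> tau x y /=; rewrite st_updS //.
  by rewrite lift0 eq_sym neq_ltn ltnSn.
- move=> tau x /=; rewrite W_updS ?h1 ?st_updS ?act_updS //=.
  by rewrite neq_ltn ltnS leqnn orbT.
under eq_bigr do rewrite hP_sum mulr1.
have E2 : \sum_(tau : traj S A H) W k tau * mu k (st tau k) (act tau k) * phi tau =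
  \sum_(tau : traj S A H) (W k tau * phi tau) *
     (fun tau y => mu k (st tau k) y) tau (getA tau k).
  by apply: eq_bigr => tau _ /=; rewrite mulrAC.
rewrite E2 (elimA k (fun tau => W k tau * phi tau)
  (fun tau y => mu k (st tau k) y)); first last.
- by move=> tau x y /=.
- by move=> tau y /=; rewrite W_updA ?h2.
by under eq_bigr do rewrite hmu_sum mulr1.
Qed.

Lemma CW n : forall k, (k + n = H)%N -> forall phi : traj S A H -> R,
  (forall j : 'I_H, (k <= j)%N ->
     (forall tau x, phi (updS tau (lift ord0 j) x) = phi tau) /\
     (forall tau y, phi (updA tau j y) = phi tau)) ->
  (#|S|%:R * #|A|%:R) ^+ n * \sum_(tau : traj S A H) traj_prob d1 mu P tau * phi tau
  = \sum_(tau : traj S A H) W k tau * phi tau.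
Proof.
elim: n => [|n IH] k hk phi hphi.
  rewrite expr0 mul1r addn0 in hk *; rewrite hk.
  by apply: eq_bigr => tau _; rewrite W_H.
have kH : (k < H)%N by rewrite -hk addnS ltnS leq_addr.
rewrite exprS -mulrA (IH k.+1) ?addSnnS //; last first.
  by move=> j kj; apply: hphi; apply: ltnW.
have [h1 h2] := hphi (Ordinal kH) (leqnn k).
exact: (stepW (Ordinal kH)).
Qed.

Lemma nonempty_sum1 (T : finType) (f : T -> R) : \sum_x f x = 1 -> (0 < #|T|)%N.
Proof.
move=> h; rewrite lt0n; apply/eqP => c; move: h.
rewrite big_pred0 => [/esym/eqP|x]; first by rewrite oner_eq0.
by have := card0_eq c x.
Qed.

Lemma sum_tp1 : \sum_(tau : traj S A H) traj_prob d1 mu P tau = 1.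
Proof.
have hS := nonempty_sum1 _ _ hd1_sum.
have hc : (0 < (#|S|%:R * #|A|%:R) ^+ H :> R).
  case: (posnP H) => [->|hH]; first by rewrite expr0.
  apply: exprn_gt0; rewrite mulr_gt0 // ltr0n //.
  case/card_gt0P: hS => s0 _.
  exact: (nonempty_sum1 _ _ (hmu_sum (Ordinal hH) s0)).
have := CW H 0 (add0n H) (fun _ => 1)
  (fun j _ => conj (fun _ _ => erefl) (fun _ _ => erefl)).
have E : \sum_(tau : traj S A H) W 0 tau * 1 =
   \sum_(tau : traj S A H) 1 * (fun _ x => d1 x) tau (getS tau ord0).
  apply: eq_bigr => tau _; rewrite /W big_pred0 ?mulr1 ?mul1r //.
rewrite E => h.
have hK : (#|S|%:R * (#|S|%:R * #|A|%:R) ^+ H : R) != 0.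
  by rewrite mulf_neq0 // ?gt_eqF // ltr0n.
apply: (mulfI hK); rewrite mulr1 -mulrA.
under eq_bigr do rewrite -[traj_prob _ _ _ _]mulr1.
rewrite h (elimS ord0 (fun _ => 1) (fun _ x => d1 x)) //.
under eq_bigr do rewrite hd1_sum mulr1.
rewrite sumr_const card_prod !card_ffun !card_ord.
by rewrite natrM !natrX exprMn exprS mulrA.
Qed.


Definition cnd (t : 'I_H) (s : S) (a : A) (tau : traj S A H) : bool :=
  (st tau t == s) && (act tau t == a).

Lemma cnd_updS (t : 'I_H) (s : S) (a : A) (tau : traj S A H) (j : 'I_H) (x : S) : (t <= j)%N ->
  cnd t s a (updS tau (lift ord0 j) x) = cnd t s a tau.
Proof.
move=> tj; rewrite /cnd st_updS // lift0 /= neq_ltn; apply/orP; right.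
by rewrite ltnS.
Qed.

Lemma cnd_updA (t : 'I_H) (s : S) (a : A) (tau : traj S A H) (j : 'I_H) (y : A) : (t < j)%N ->
  cnd t s a (updA tau j y) = cnd t s a tau.
Proof.
move=> tj; rewrite /cnd act_updA //; apply/eqP => e.
by move: tj; rewrite e ltnn.
Qed.

Lemma markovF (t : 'I_H) (s : S) (a : A) (g : S -> R) :
  #|S|%:R * (#|S|%:R * #|A|%:R) ^+ (H - t.+1) *
  \sum_(tau : traj S A H) traj_prob d1 mu P tau *
     (if cnd t s a tau then g (nxt tau t) else 0)
  = (\sum_x P t s a x * g x) *
    \sum_(tau : traj S A H) W t tau * (if cnd t s a tau then mu t s a else 0).
Proof.
rewrite -mulrA (CW (H - t.+1) t.+1); first last.
- move=> j tj; split => tau x.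
    rewrite cnd_updS; last exact: ltnW.
    by case: ifP => // _; rewrite nxt_updS // lift0 /= eqSS neq_ltn tj orbT.
  by rewrite cnd_updA // nxt_updA.
- by rewrite subnKC.
have E : \sum_(tau : traj S A H) W t.+1 tau *
     (if cnd t s a tau then g (nxt tau t) else 0) =
   \sum_(tau : traj S A H) (W t tau * (if cnd t s a tau then mu t s a else 0)) *
     (fun _ x => P t s a x * g x) tau (getS tau (lift ord0 t)).
  apply: eq_bigr => tau _; rewrite W_S /fac /cnd /getS /nxt /=.
  case: ifP => [/andP[/eqP-> /eqP->]|_]; first by ring.
  by rewrite !(mulr0, mul0r).
rewrite E (elimS (lift ord0 t) (fun tau => W t tau * (if cnd t s a tau then mu t s a else 0))
  (fun _ x => P t s a x * g x)) //; last first.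
  by move=> tau x; rewrite W_updS ?cnd_updS // lift0.
by rewrite -mulr_suml mulrC.
Qed.

Lemma markov (t : 'I_H) (s : S) (a : A) (g : S -> R) :
  \sum_(tau : traj S A H) traj_prob d1 mu P tau *
     (if cnd t s a tau then g (nxt tau t) else 0)
  = occupancy d1 mu P t s a * \sum_x P t s a x * g x.
Proof.
have hK : (#|S|%:R * (#|S|%:R * #|A|%:R) ^+ (H - t.+1) : R) != 0.
  have hS : (0 < #|S|)%N by apply/card_gt0P; exists s.
  have hA : (0 < #|A|)%N by apply/card_gt0P; exists a.
  by rewrite mulf_neq0 // ?expf_neq0 // ?mulf_neq0 // pnatr_eq0 -lt0n.
apply: (mulfI hK); rewrite markovF.
have -> : occupancy d1 mu P t s a = \sum_(tau : traj S A H) traj_prob d1 mu P tau *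
     (if cnd t s a tau then (fun=> 1) (nxt tau t) else 0).
  rewrite /occupancy big_mkcond /=; apply: eq_bigr => tau _; rewrite /cnd.
  by case: ifP => _; rewrite ?mulr1 ?mulr0.
rewrite mulrA (markovF t s a (fun=> 1)).
under [X in _ = X * _ * _]eq_bigr do rewrite mulr1.
by rewrite hP_sum mul1r mulrC.
Qed.

End Traj.

Lemma sum_sq_dev (R : realType) (T : finType) (p g : T -> R) (c : R) :
  \sum_x p x * (g x - c) ^+ 2 =
  \sum_x p x * g x ^+ 2 - 2 * c * \sum_x p x * g x + c ^+ 2 * \sum_x p x.
Proof.
transitivity (\sum_x (p x * g x ^+ 2 + ((- (2 * c)) * (p x * g x) + c ^+ 2 * p x))).
  by apply: eq_bigr => x _; ring.
by rewrite !big_split /= -!mulr_sumr; ring.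
Qed.

Lemma wvar (R : realType) (T : finType) (p g : T -> R) (B : R) :
  (forall x, 0 <= p x) -> \sum_x p x = 1 -> (forall x, 0 <= g x <= B) ->
  \sum_x p x * (g x - \sum_y p y * g y) ^+ 2 =
     \sum_x p x * g x ^+ 2 - (\sum_x p x * g x) ^+ 2 /\
  0 <= \sum_x p x * g x ^+ 2 - (\sum_x p x * g x) ^+ 2 <= B ^+ 2 / 4.
Proof.
move=> hp hs hg.
have E : \sum_x p x * (g x - \sum_y p y * g y) ^+ 2 =
     \sum_x p x * g x ^+ 2 - (\sum_x p x * g x) ^+ 2.
  by rewrite sum_sq_dev hs; ring.
split => //; rewrite -E; apply/andP; split.
  by apply: sumr_ge0 => x _; rewrite mulr_ge0 // sqr_ge0.
rewrite E.
set mu := \sum_x p x * g x.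
have h1 : \sum_x p x * g x ^+ 2 <= B * mu.
  rewrite /mu mulr_sumr; apply: ler_sum => x _.
  have /andP[g0 gB] := hg x.
  by rewrite [B * _]mulrCA ler_wpM2l // expr2 ler_wpM2r.
have := sqr_ge0 (mu - B / 2); nra.
Qed.

Section Prob.
Variables (R : realType) (S A : finType) (H m : nat) (d1 : S -> R)
  (mu : 'I_H -> S -> A -> R) (P : 'I_H -> S -> A -> S -> R).
Hypothesis hd1_ge0 : forall s, 0 <= d1 s.
Hypothesis hd1_sum : \sum_(s : S) d1 s = 1.
Hypothesis hmu_ge0 : forall t s a, 0 <= mu t s a.
Hypothesis hmu_sum : forall t s, \sum_(a : A) mu t s a = 1.
Hypothesis hP_ge0 : forall t s a s', 0 <= P t s a s'.
Hypothesis hP_sum : forall t s a, \sum_(s' : S) P t s a s' = 1.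

Lemma tp_ge0 (tau : traj S A H) : 0 <= traj_prob d1 mu P tau.
Proof. by rewrite /traj_prob mulr_ge0 // prodr_ge0 // => i _; rewrite mulr_ge0. Qed.

Lemma dp_ge0 (D : {ffun 'I_m -> traj S A H}) : 0 <= dataset_prob d1 mu P D.
Proof. by rewrite /dataset_prob prodr_ge0 // => i _; apply: tp_ge0. Qed.

Lemma occ_ge0 t s a : 0 <= occupancy d1 mu P t s a.
Proof. by apply: sumr_ge0 => tau _; apply: tp_ge0. Qed.

Lemma sum_dp1 : \sum_(D : {ffun 'I_m -> traj S A H}) dataset_prob d1 mu P D = 1.
Proof.
rewrite /dataset_prob -(bigA_distr_bigA (fun (i : 'I_m) tau => traj_prob d1 mu P tau)) /=.
by rewrite (sum_tp1 _ _ _ _ _ _ _ hd1_sum hmu_sum hP_sum) prodr_const expr1n.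
Qed.

Variables (t : 'I_H) (s : S) (a : A) (f : S -> R) (B : R).
Hypothesis hf : forall x, 0 <= f x <= B.

Definition muf := \sum_x P t s a x * f x.

Lemma muf_range : 0 <= muf <= B.
Proof.
apply/andP; split.
  by apply: sumr_ge0 => x _; rewrite mulr_ge0 //; case/andP: (hf x).
rewrite /muf -[B]mul1r -(hP_sum t s a) mulr_suml; apply: ler_sum => x _.
by rewrite ler_wpM2l //; case/andP: (hf x).
Qed.

Definition Zf (tau : traj S A H) : R :=
  if cnd S A H t s a tau then f (nxt tau t) - muf else 0.

Lemma Zf_norm tau : `|Zf tau| <= B.
Proof.
rewrite /Zf; case: ifP => _.
  have := hf (nxt tau t); have := muf_range.
  move=> /andP[m0 mB] /andP[f0 fB]; rewrite ler_norml; apply/andP; split; lra.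
by rewrite normr0; case/andP: (hf s) => h0 h1; apply: le_trans h1.
Qed.

Lemma EZ : \sum_(tau : traj S A H) traj_prob d1 mu P tau * Zf tau = 0.
Proof.
rewrite /Zf (markov _ _ _ _ _ _ _ hmu_sum hP_sum t s a (fun x => f x - muf)).
under eq_bigr do rewrite mulrBr.
by rewrite sumrB -mulr_suml hP_sum mul1r subrr mulr0.
Qed.

Lemma EZ2 : \sum_(tau : traj S A H) traj_prob d1 mu P tau * Zf tau ^+ 2 <=
   occupancy d1 mu P t s a * (B ^+ 2 / 4).
Proof.
have -> : \sum_(tau : traj S A H) traj_prob d1 mu P tau * Zf tau ^+ 2 =
   \sum_(tau : traj S A H) traj_prob d1 mu P tau *
     (if cnd S A H t s a tau then (fun x => (f x - muf) ^+ 2) (nxt tau t) else 0).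
  by apply: eq_bigr => tau _; rewrite /Zf; case: ifP => //; rewrite expr0n mulr0.
rewrite (markov _ _ _ _ _ _ _ hmu_sum hP_sum t s a (fun x => (f x - muf) ^+ 2)) ler_wpM2l ?occ_ge0 //.
have [E /andP[_ h]] := wvar _ _ (P t s a) f B (hP_ge0 t s a) (hP_sum t s a) hf.
by rewrite /muf E.
Qed.


Lemma mgf1 (l : R) : `|l| * B <= 3^-1 ->
  \sum_(tau : traj S A H) traj_prob d1 mu P tau * expR (l * Zf tau) <=
  1 + occupancy d1 mu P t s a * (l ^+ 2 * (B ^+ 2 / 4)).
Proof.
move=> hl.
apply: (@le_trans _ _ (\sum_(tau : traj S A H) (traj_prob d1 mu P tau +
     l * (traj_prob d1 mu P tau * Zf tau) + l ^+ 2 * (traj_prob d1 mu P tau * Zf tau ^+ 2)))).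
  apply: ler_sum => tau _.
  have -> : traj_prob d1 mu P tau + l * (traj_prob d1 mu P tau * Zf tau) +
     l ^+ 2 * (traj_prob d1 mu P tau * Zf tau ^+ 2) =
     traj_prob d1 mu P tau * (1 + l * Zf tau + (l * Zf tau) ^+ 2) by ring.
  rewrite ler_wpM2l ?tp_ge0 // exp_quad //.
  by rewrite normrM; apply: le_trans hl; rewrite ler_wpM2l // Zf_norm.
rewrite !big_split /= -!mulr_sumr (sum_tp1 _ _ _ _ _ _ _ hd1_sum hmu_sum hP_sum) EZ mulr0 addr0.
rewrite lerD2l mulrCA ler_wpM2l ?sqr_ge0 //; exact: EZ2.
Qed.

Definition SZ (D : {ffun 'I_m -> traj S A H}) : R := \sum_(i < m) Zf (D i).

Lemma mgf (l : R) : `|l| * B <= 3^-1 ->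
  \sum_(D : {ffun 'I_m -> traj S A H}) dataset_prob d1 mu P D * expR (l * SZ D) <=
  expR (m%:R * (occupancy d1 mu P t s a * (l ^+ 2 * (B ^+ 2 / 4)))).
Proof.
move=> hl.
have -> : \sum_(D : {ffun 'I_m -> traj S A H}) dataset_prob d1 mu P D * expR (l * SZ D) =
   \sum_(D : {ffun 'I_m -> traj S A H}) \prod_(i < m)
      (traj_prob d1 mu P (D i) * expR (l * Zf (D i))).
  apply: eq_bigr => D _; rewrite big_split /= /SZ mulr_sumr expR_sum //.
rewrite -(bigA_distr_bigA (fun (i : 'I_m) tau => traj_prob d1 mu P tau * expR (l * Zf tau))) /=.
rewrite prodr_const card_ord expRM_natl; apply: lerXn2r; rewrite ?nnegrE.
- by apply: sumr_ge0 => tau _; rewrite mulr_ge0 ?tp_ge0 ?expR_ge0.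
- exact: expR_ge0.
- apply: le_trans (mgf1 l hl) _; exact: expR_ge1Dx.
Qed.

Lemma tail (r sg : R) : 0 < B -> 0 <= r -> 6 * r <= 1 -> sg ^+ 2 = 1 ->
  \sum_(D : {ffun 'I_m -> traj S A H}) dataset_prob d1 mu P D *
     ((B * m%:R * occupancy d1 mu P t s a * r <= sg * SZ D)%R)%:R
  <= expR (- (m%:R * occupancy d1 mu P t s a * r ^+ 2)).
Proof.
move=> B0 r0 r6 sg1.
set u := B * m%:R * occupancy d1 mu P t s a * r.
set c := 2 * r / B.
have c0 : 0 <= c by rewrite /c divr_ge0 ?mulr_ge0 // ltW.
have sgn : `|sg| = 1.
  by apply/eqP; rewrite -(@eqrXn2 _ 2) ?normr_ge0 // real_normK ?num_real // sg1 expr1n.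
apply: (@le_trans _ _ (\sum_(D : {ffun 'I_m -> traj S A H})
    dataset_prob d1 mu P D * expR ((sg * c) * SZ D) * expR (- (c * u)))).
  apply: ler_sum => D _; rewrite -mulrA; apply: ler_wpM2l; first exact: dp_ge0.
  rewrite -expRD; case h: (u <= sg * SZ D); last exact: expR_ge0.
  rewrite -[1%:R]/1 -expR0 ler_expR.
  have -> : sg * c * SZ D + - (c * u) = c * (sg * SZ D - u) by ring.
  by rewrite mulr_ge0 // subr_ge0.
rewrite -mulr_suml.
apply: le_trans.
  apply: ler_wpM2r; first exact: expR_ge0.
  apply: mgf; rewrite normrM sgn mul1r ger0_norm // /c mulrAC -mulrA divff ?gt_eqF //.
  by rewrite mulr1; lra.
rewrite -expRD ler_expR /u /c.
have Bn : B != 0 by rewrite gt_eqF.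
rewrite exprMn sg1 mul1r.
have -> : (2 * r / B) ^+ 2 * (B ^+ 2 / 4) = r ^+ 2 by field.
have -> : 2 * r / B * (B * m%:R * occupancy d1 mu P t s a * r) =
   2 * (m%:R * occupancy d1 mu P t s a * r ^+ 2) by field.
lra.
Qed.

End Prob.

Section Det.
Variables (R : realType) (S A : finType) (H m : nat)
  (P : 'I_H -> S -> A -> S -> R).
Hypothesis hP_ge0 : forall t s a s', 0 <= P t s a s'.
Hypothesis hP_sum : forall t s a, \sum_(s' : S) P t s a s' = 1.
Variables (V : S -> R) (B : R).
Hypothesis hV : forall x, 0 <= V x <= B.
Variables (D : {ffun 'I_m -> traj S A H}) (t : 'I_H) (s : S) (a : A).
Hypothesis hn : (0 < visits D t s a)%N.

Let c (i : 'I_m) : bool := cnd S A H t s a (D i).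
Let n : R := (visits D t s a)%:R.
Let pw (i : 'I_m) : R := if c i then n^-1 else 0.

Lemma n_gt0 : 0 < n. Proof. by rewrite ltr0n. Qed.

Lemma sum_c1 : \sum_(i < m | c i) (1 : R) = n.
Proof.
rewrite (eq_bigl (fun i => i \in [set i | c i])); last by move=> i; rewrite inE.
by rewrite sumr_const.
Qed.

Lemma pw_sum (g : 'I_m -> R) : \sum_i pw i * g i = n^-1 * \sum_(i < m | c i) g i.
Proof.
rewrite [RHS]mulr_sumr [RHS]big_mkcond /=; apply: eq_bigr => i _; rewrite /pw.
by case: (c i); rewrite ?mul0r.
Qed.

Lemma pw_ge0 i : 0 <= pw i.
Proof. by rewrite /pw; case: (c i); rewrite ?invr_ge0 ?ler0n. Qed.

Lemma pw_1 : \sum_i pw i = 1.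
Proof.
rewrite (eq_bigr (fun i => pw i * (fun=> 1) i)); last by move=> i _; rewrite mulr1.
by rewrite pw_sum sum_c1 mulVf // gt_eqF // n_gt0.
Qed.

Definition emf (f : S -> R) : R := n^-1 * \sum_(i < m | c i) f (nxt (D i) t).

Lemma SZ_emf (f : S -> R) : SZ _ _ _ _ _ P t s a f D = n * (emf f - muf _ _ _ _ P t s a f).
Proof.
rewrite /SZ /Zf /emf mulrBr mulrA mulfV ?gt_eqF ?n_gt0 // mul1r.
rewrite -sum_c1 mulr_suml mul1r -sumrB big_mkcond /=.
by rewrite [RHS]big_mkcond.
Qed.

Lemma emf_range (f : S -> R) (C : R) : (forall x, 0 <= f x <= C) -> 0 <= emf f <= C.
Proof.
move=> hf; rewrite /emf -(pw_sum (fun i => f (nxt (D i) t))); apply/andP; split.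
  by apply: sumr_ge0 => i _; rewrite mulr_ge0 ?pw_ge0 //; case/andP: (hf (nxt (D i) t)).
rewrite -[C]mul1r -pw_1 mulr_suml; apply: ler_sum => i _.
by rewrite ler_wpM2l ?pw_ge0 //; case/andP: (hf (nxt (D i) t)).
Qed.


Lemma B_ge0 : 0 <= B.
Proof. by case/andP: (hV s) => h1 h2; apply: le_trans h2. Qed.

Lemma empvar_eq : emp_var V D t s a = emf (fun x => V x ^+ 2) - emf V ^+ 2.
Proof. by []. Qed.

Lemma empvar_range : 0 <= emp_var V D t s a <= B ^+ 2 / 4.
Proof.
have [_] := wvar _ _ pw (fun i => V (nxt (D i) t)) B pw_ge0 pw_1 (fun i => hV _).
rewrite (pw_sum (fun i => V (nxt (D i) t))).
have E2 := pw_sum (fun i => V (nxt (D i) t) ^+ 2); rewrite /= in E2; by rewrite E2.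
Qed.

Lemma truevar_eq : true_var P V t s a =
  muf _ _ _ _ P t s a (fun x => V x ^+ 2) - muf _ _ _ _ P t s a V ^+ 2 /\
  0 <= true_var P V t s a <= B ^+ 2 / 4.
Proof.
have [E h] := wvar _ _ (P t s a) V B (hP_ge0 t s a) (hP_sum t s a) hV.
by rewrite /true_var E.
Qed.

Lemma diff_small (K rho : R) : 0 <= rho -> K <= 2 * n ->
  `|SZ _ _ _ _ _ P t s a V D| <= B * K * rho ->
  `|SZ _ _ _ _ _ P t s a (fun x => V x ^+ 2) D| <= B ^+ 2 * K * rho ->
  `|emp_var V D t s a - true_var P V t s a| <= 6 * B ^+ 2 * rho.
Proof.
move=> r0 Kn h1 h2.
have n0 := n_gt0; have B0 := B_ge0.
have hV2 : forall x, 0 <= V x ^+ 2 <= B ^+ 2.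
  move=> x; case/andP: (hV x) => a0 a1; rewrite sqr_ge0 /=.
  by rewrite lerXn2r ?nnegrE // (le_trans a0).
rewrite SZ_emf normrM (ger0_norm (ltW n0)) in h1.
rewrite SZ_emf normrM (ger0_norm (ltW n0)) in h2.
set e1 := emf V - muf _ _ _ _ P t s a V in h1.
set e2 := emf (fun x => V x ^+ 2) - muf _ _ _ _ P t s a (fun x => V x ^+ 2) in h2.
have he1 : `|e1| <= 2 * B * rho.
  have : n * `|e1| <= n * (2 * B * rho).
    apply: (le_trans h1); have : 0 <= B * rho by rewrite mulr_ge0.
    by move=> ?; nra.
  by rewrite ler_pM2l.
have he2 : `|e2| <= 2 * B ^+ 2 * rho.
  have : n * `|e2| <= n * (2 * B ^+ 2 * rho).
    apply: (le_trans h2); have : 0 <= B ^+ 2 * rho by rewrite mulr_ge0 ?sqr_ge0.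
    by move=> ?; nra.
  by rewrite ler_pM2l.
have [Et _] := truevar_eq.
rewrite empvar_eq Et.
have -> : emf (fun x => V x ^+ 2) - emf V ^+ 2 -
   (muf _ _ _ _ P t s a (fun x => V x ^+ 2) - muf _ _ _ _ P t s a V ^+ 2) =
   e2 - e1 * (emf V + muf _ _ _ _ P t s a V) by rewrite /e1 /e2; ring.
have /andP[m1 m2] := emf_range _ _ hV.
have /andP[u1 u2] := @muf_range _ _ _ _ _ hP_ge0 hP_sum t s a V B hV.
apply: (le_trans (ler_normB _ _)); rewrite normrM.
have hs : `|emf V + muf _ _ _ _ P t s a V| <= 2 * B.
  by rewrite ger0_norm ?addr_ge0 //; lra.
have : `|e1| * `|emf V + muf _ _ _ _ P t s a V| <= 2 * B * rho * (2 * B).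
  by apply: ler_pM => //; rewrite normr_ge0.
nra.
Qed.

End Det.

Section Main.
Variables (R : realType) (S A : finType) (H m : nat)
  (d1 : S -> R) (mu : 'I_H -> S -> A -> R) (P : 'I_H -> S -> A -> S -> R)
  (Vin : 'I_H -> S -> R) (delta : R).
Hypotheses (hd1_ge0 : forall s, 0 <= d1 s) (hd1_sum : \sum_(s : S) d1 s = 1)
  (hmu_ge0 : forall t s a, 0 <= mu t s a) (hmu_sum : forall t s, \sum_(a : A) mu t s a = 1)
  (hP_ge0 : forall t s a s', 0 <= P t s a s')
  (hP_sum : forall t s a, \sum_(s' : S) P t s a s' = 1)
  (hV : forall t s, 0 <= Vin t s <= H%:R)
  (hdelta : 0 < delta < 1).

Definition goodT (t : 'I_H) (s : S) (a : A) (D : {ffun 'I_m -> traj S A H}) : bool :=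
  (0 < occupancy d1 mu P t s a) ==>
  (`| tilde_var d1 mu P (Vin t) D t s a - true_var P (Vin t) t s a |
     <= 6 * H%:R ^+ 2 *
          Num.sqrt (ln (4 * H%:R * #|S|%:R * #|A|%:R / delta)
                    / (m%:R * occupancy d1 mu P t s a))
        + 4 * H%:R ^+ 2 * ln (4 * H%:R * #|S|%:R * #|A|%:R / delta)
          / (m%:R * occupancy d1 mu P t s a)).

Lemma ind4 (b1 b2 b3 b4 : bool) : [|| b1, b2, b3 | b4] ->
  1 <= (b1%:R + b2%:R + b3%:R + b4%:R : R).
Proof. by case: b1; case: b2; case: b3; case: b4 => //= _; lra. Qed.

Lemma triple (t : 'I_H) (s : S) (a : A) :
  \sum_(D : {ffun 'I_m -> traj S A H}) dataset_prob d1 mu P D * (~~ goodT t s a D)%:R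
  <= 4 * (4 * H%:R * #|S|%:R * #|A|%:R / delta)^-1.
Proof.
set xx := 4 * H%:R * #|S|%:R * #|A|%:R / delta.
set LL := ln xx.
have H0 : (0 < H)%N by apply: (leq_ltn_trans (leq0n t)) (ltn_ord t).
have S0 : (0 < #|S|)%N by apply/card_gt0P; exists s.
have A0 : (0 < #|A|)%N by apply/card_gt0P; exists a.
have H1 : 1 <= H%:R :> R by rewrite ler1n.
have S1 : 1 <= #|S|%:R :> R by rewrite ler1n.
have A1 : 1 <= #|A|%:R :> R by rewrite ler1n.
case/andP: hdelta => dl0 dl1.
have xx4 : 4 <= xx.
  rewrite /xx ler_pdivlMr //.
  have : 1 <= H%:R * #|S|%:R * #|A|%:R :> R.
    have h1 : 1 <= H%:R * #|S|%:R :> R by nra.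
    nra.
  nra.
have xx0 : 0 < xx by apply: lt_le_trans xx4; lra.
have L0 : 0 <= LL by rewrite ln_ge0 //; lra.
set d := occupancy d1 mu P t s a.
have d0 : 0 <= d by apply: occ_ge0.
set r := Num.sqrt (LL / (m%:R * d)).
have r0 : 0 <= r by apply: sqrtr_ge0.
set RHS := 6 * H%:R ^+ 2 * r + 4 * H%:R ^+ 2 * LL / (m%:R * d).
have RHSge : 6 * H%:R ^+ 2 * r <= RHS.
  rewrite /RHS lerDl divr_ge0 ?mulr_ge0 ?sqr_ge0 //; lra.
have RHS0 : 0 <= RHS by apply: le_trans RHSge; rewrite mulr_ge0 ?sqr_ge0 //; lra.
have hVt : forall x, 0 <= Vin t x <= H%:R by move=> x; apply: hV.
have bad_branch : forall D, ~~ goodT t s a D ->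
  [/\ 0 < d, 2^-1 * m%:R * d <= (visits D t s a)%:R, (0 < visits D t s a)%N &
      RHS < `|emp_var (Vin t) D t s a - true_var P (Vin t) t s a|].
  move=> D; rewrite /goodT negb_imply -/xx -/LL -/d -/r -/RHS => /andP[dpos].
  rewrite /tilde_var; case: ifP => [/andP[h1 h2]|_]; rewrite -ltNge => hlt //.
  by exfalso; move: hlt; rewrite subrr normr0 ltNge RHS0.
have m0 : forall D, ~~ goodT t s a D -> (0 < m)%N.
  move=> D /bad_branch [_ _ hn _]; apply: (leq_trans hn).
  by rewrite /visits; apply: leq_trans (max_card _) _; rewrite card_ord.
case: (boolP [&& 6 * r <= 1, 0 < d & (0 < m)%N]) => hc; last first.
  apply: le_trans (_ : 0 <= _); last by rewrite mulr_ge0 ?invr_ge0 //; lra.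
  rewrite le_eqVlt; apply/orP; left; apply/eqP; apply: big1 => D _.
  case g : (goodT t s a D); first by rewrite mulr0.
  have [dpos hn1 hn2 hlt] := bad_branch D (negbT g).
  have mpos := m0 D (negbT g).
  have r6 : 1 < 6 * r by move: hc; rewrite dpos mpos !andbT -ltNge.
  have /andP[e0 e1] := empvar_range _ _ _ _ _ _ _ hVt _ _ _ _ hn2.
  have [_ /andP[v0 v1]] := truevar_eq _ _ _ _ _ hP_ge0 hP_sum _ _ hVt t s a.
  have : `|emp_var (Vin t) D t s a - true_var P (Vin t) t s a| <= H%:R ^+ 2 / 4.
    by rewrite ler_norml; apply/andP; split; lra.
  have : 0 <= H%:R ^+ 2 :> R by apply: sqr_ge0.
  move=> hh1 hh2; exfalso; move: hlt; rewrite ltNge => /negP; apply.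
  apply: le_trans hh2 _; apply: le_trans RHSge; nra.
case/and3P: hc => r6 dpos mpos.
have Hpos : 0 < H%:R :> R by lra.
have hVt2 : forall x, 0 <= Vin t x ^+ 2 <= H%:R ^+ 2.
  move=> x; case/andP: (hVt x) => a0 a1; rewrite sqr_ge0 /=.
  by rewrite lerXn2r ?nnegrE // (le_trans a0).
set SZ1 := SZ R S A H m P t s a (Vin t).
set SZ2 := SZ R S A H m P t s a (fun x => Vin t x ^+ 2).
set u1 := H%:R * m%:R * d * r.
set u2 := H%:R ^+ 2 * m%:R * d * r.
have pw : forall D, dataset_prob d1 mu P D * (~~ goodT t s a D)%:R <=
   dataset_prob d1 mu P D * ((u1 <= 1 * SZ1 D)%R)%:R +
   dataset_prob d1 mu P D * ((u1 <= -1 * SZ1 D)%R)%:R +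
   dataset_prob d1 mu P D * ((u2 <= 1 * SZ2 D)%R)%:R +
   dataset_prob d1 mu P D * ((u2 <= -1 * SZ2 D)%R)%:R.
  move=> D; have dp0 := dp_ge0 _ _ _ _ _ _ _ _ hd1_ge0 hmu_ge0 hP_ge0 D.
  case g : (goodT t s a D) => /=.
    by rewrite mulr0 !addr_ge0 // mulr_ge0 // ler0n.
  have [_ hn1 hn2 hlt] := bad_branch D (negbT g).
  rewrite -!mulrDr; apply: ler_wpM2l => //; apply: ind4.
  apply/negPn/negP; rewrite !negb_or -!ltNge !mul1r !mulN1r => /and4P[c1 c2 c3 c4].
  have hs := diff_small _ _ _ _ _ _ hP_ge0 hP_sum _ _ hVt _ _ _ _ hn2 (m%:R * d) r r0.
  move: hlt; rewrite ltNge => /negP; apply; apply: le_trans RHSge.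
  apply: hs.
  - lra.
  - by rewrite ler_norml; apply/andP; split; rewrite /u1 /SZ1 in c1 c2; nra.
  - by rewrite ler_norml; apply/andP; split; rewrite /u2 /SZ2 in c3 c4; nra.
apply: (le_trans (ler_sum _ (fun D _ => pw D))).
rewrite !big_split /=.
have E : expR (- (m%:R * d * r ^+ 2)) = xx^-1.
  have md0 : 0 < m%:R * d by rewrite mulr_gt0 // ltr0n.
  have rr : r ^+ 2 = LL / (m%:R * d) by rewrite /r sqr_sqrtr // divr_ge0 // ltW.
  have -> : m%:R * d * r ^+ 2 = LL by rewrite rr [_ * (LL / _)]mulrC divfK // gt_eqF.
  by rewrite expRN /LL lnK // posrE.
have t1 := tail _ _ _ _ m _ _ _ hd1_ge0 hd1_sum hmu_ge0 hmu_sum hP_ge0 hP_sum t s a _ _ hVt r 1 Hpos r0 r6 (expr1n _ 2).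
have t2 := tail _ _ _ _ m _ _ _ hd1_ge0 hd1_sum hmu_ge0 hmu_sum hP_ge0 hP_sum t s a _ _ hVt r (-1) Hpos r0 r6 (etrans (sqrrN 1) (expr1n _ 2)).
have Hpos2 : 0 < H%:R ^+ 2 :> R by rewrite exprn_gt0.
have t3 := tail _ _ _ _ m _ _ _ hd1_ge0 hd1_sum hmu_ge0 hmu_sum hP_ge0 hP_sum t s a _ _ hVt2 r 1 Hpos2 r0 r6 (expr1n _ 2).
have t4 := tail _ _ _ _ m _ _ _ hd1_ge0 hd1_sum hmu_ge0 hmu_sum hP_ge0 hP_sum t s a _ _ hVt2 r (-1) Hpos2 r0 r6 (etrans (sqrrN 1) (expr1n _ 2)).
rewrite -/d E in t1 t2 t3 t4.
rewrite -/SZ1 in t1 t2; rewrite -/SZ2 in t3 t4.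
lra.
Qed.

Lemma ind_forall (I : finType) (b : pred I) :
  ((~~ [forall i, b i]) %:R : R) <= \sum_i (~~ b i)%:R.
Proof.
case: (boolP [forall i, b i]) => h /=.
  by rewrite sumr_ge0 // => i _; rewrite ler0n.
case/forallPn: h => i0 hi0; rewrite (bigD1 i0) //= hi0 lerDl.
by rewrite sumr_ge0 // => i _; rewrite ler0n.
Qed.

Lemma main_sec :
  \sum_(D : {ffun 'I_m -> traj S A H} |
        [forall t : 'I_H, forall s : S, forall a : A, goodT t s a D])
     dataset_prob d1 mu P D
  >= 1 - delta.
Proof.
have dp0 := dp_ge0 _ _ _ _ m _ _ _ hd1_ge0 hmu_ge0 hP_ge0.
have E : \sum_(D : {ffun 'I_m -> traj S A H} |
        [forall t : 'I_H, forall s : S, forall a : A, goodT t s a D])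
     dataset_prob d1 mu P D =
   1 - \sum_(D : {ffun 'I_m -> traj S A H}) dataset_prob d1 mu P D *
       (~~ [forall t : 'I_H, forall s : S, forall a : A, goodT t s a D])%:R.
  rewrite -{1}(sum_dp1 _ _ _ _ m _ _ _ hd1_sum hmu_sum hP_sum) -sumrB big_mkcond /=.
  by apply: eq_bigr => D _; case: ifP => _ /=; rewrite ?mulr0 ?subr0 ?mulr1 ?subrr.
rewrite E lerD2l lerN2.
apply: (@le_trans _ _ (\sum_(D : {ffun 'I_m -> traj S A H}) dataset_prob d1 mu P D *
   \sum_(t : 'I_H) \sum_(s : S) \sum_(a : A) (~~ goodT t s a D)%:R)).
  apply: ler_sum => D _; apply: ler_wpM2l => //.
  apply: (le_trans (ind_forall _ (fun t => [forall s : S, forall a : A, goodT t s a D]))).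
  apply: ler_sum => t _.
  apply: (le_trans (ind_forall _ (fun s => [forall a : A, goodT t s a D]))).
  apply: ler_sum => s _.
  exact: (ind_forall _ (fun a => goodT t s a D)).
have -> : \sum_(D : {ffun 'I_m -> traj S A H}) dataset_prob d1 mu P D *
   \sum_(t : 'I_H) \sum_(s : S) \sum_(a : A) (~~ goodT t s a D)%:R =
   \sum_(t : 'I_H) \sum_(s : S) \sum_(a : A) \sum_(D : {ffun 'I_m -> traj S A H})
     dataset_prob d1 mu P D * (~~ goodT t s a D)%:R.
  transitivity (\sum_(D : {ffun 'I_m -> traj S A H}) \sum_(t : 'I_H) \sum_(s : S)
     \sum_(a : A) dataset_prob d1 mu P D * (~~ goodT t s a D)%:R).
    apply: eq_bigr => D _; rewrite mulr_sumr; apply: eq_bigr => t _.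
    rewrite mulr_sumr; apply: eq_bigr => s _; exact: mulr_sumr.
  rewrite exchange_big; apply: eq_bigr => t _.
  rewrite exchange_big; apply: eq_bigr => s _.
  exact: exchange_big.
apply: (@le_trans _ _ (\sum_(t : 'I_H) \sum_(s : S) \sum_(a : A)
   4 * (4 * H%:R * #|S|%:R * #|A|%:R / delta)^-1)).
  apply: ler_sum => t _; apply: ler_sum => s _; apply: ler_sum => a _.
  exact: triple.
set c := 4 / (4 * H%:R * #|S|%:R * #|A|%:R / delta).
rewrite !sumr_const card_ord -!mulrnA -mulr_natr !natrM /c.
case/andP: hdelta => dl0 dl1.
have [K0|K0] := eqVneq (H%:R * #|S|%:R * #|A|%:R : R) 0.
  by move/eqP: K0; rewrite !mulf_eq0 => /orP[/orP[]|] /eqP ->; rewrite ?(mulr0, mul0r) ltW.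
by rewrite !mulrA arith4 // gt_eqF.
Qed.

End Main.

Theorem lemmaB3 (R : realType) (S A : finType) (H m : nat)
  (d1 : S -> R) (mu : 'I_H -> S -> A -> R) (P : 'I_H -> S -> A -> S -> R)
  (Vin : 'I_H -> S -> R) (delta : R)
  (hd1_ge0 : forall s, 0 <= d1 s) (hd1_sum : \sum_(s : S) d1 s = 1)
  (hmu_ge0 : forall t s a, 0 <= mu t s a) (hmu_sum : forall t s, \sum_(a : A) mu t s a = 1)
  (hP_ge0 : forall t s a s', 0 <= P t s a s')
  (hP_sum : forall t s a, \sum_(s' : S) P t s a s' = 1)
  (hV : forall t s, 0 <= Vin t s <= H%:R)
  (hdelta : 0 < delta < 1) :
  \sum_(D : {ffun 'I_m -> traj S A H} |
        [forall t : 'I_H, forall s : S, forall a : A,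
          (0 < occupancy d1 mu P t s a) ==>
          (`| tilde_var d1 mu P (Vin t) D t s a - true_var P (Vin t) t s a |
           <= 6 * H%:R ^+ 2 *
                Num.sqrt (ln (4 * H%:R * #|S|%:R * #|A|%:R / delta)
                          / (m%:R * occupancy d1 mu P t s a))
              + 4 * H%:R ^+ 2 * ln (4 * H%:R * #|S|%:R * #|A|%:R / delta)
                / (m%:R * occupancy d1 mu P t s a))])
     dataset_prob d1 mu P D
  >= 1 - delta.
Proof.
by apply: main_sec.
Qed.
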